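(* Let $I(x)=\int_0^x e^{u^2/2}\operatorname{erf}(u/\sqrt2)\,du$. Then for every real $x\neq0$, \[ I(x)\;\ge\;\ell(x):=\sqrt{\frac{(e^{x^2/2}-1)^3}{x^2e^{x^2/2}}}. \]
   Context: $\operatorname{erf}(z)=\frac{2}{\sqrt\pi}\int_0^z e^{-t^2}dt$. *)

(* Defs.v *)
From Stdlib Require Import Reals.
From Coquelicot Require Import Coquelicot.
Open Scope R_scope.

Definition erf (z : R) : R := 2 / sqrt PI * RInt (fun t => exp (- t ^ 2)) 0 z.

Definition I_int (x : R) : R :=
  RInt (fun u => exp (u ^ 2 / 2) * erf (u / sqrt 2)) 0 x.

Definition ell (x : R) : R :=
  sqrt ((exp (x ^ 2 / 2) - 1) ^ 3 / (x ^ 2 * exp (x ^ 2 / 2))).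

(* Main.v *)
Require Import Defs.
From Stdlib Require Import Reals Lra.
From Coquelicot Require Import Coquelicot.
Open Scope R_scope.

Definition gf (t : R) := exp (- t ^ 2).
Definition G (z : R) := RInt gf 0 z.

Lemma gf_der t : is_derive gf t (-2 * t * exp (- t ^ 2)).
Proof. unfold gf. auto_derive. auto. simpl. ring. Qed.

Lemma cont_of_der (f : R -> R) x l : is_derive f x l -> continuous f x.
Proof. intros H. apply (@ex_derive_continuous R_AbsRing R_NormedModule). exists l; exact H. Qed.

Lemma gf_cont t : continuous gf t.
Proof. eapply cont_of_der. apply gf_der. Qed.

Lemma G_ex a b : ex_RInt gf a b.
Proof. apply (@ex_RInt_continuous R_CompleteNormedModule). intros; apply gf_cont. Qed.

Lemma G_deriv z : is_derive G z (gf z).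
Proof.
  apply is_derive_RInt with (f := gf) (a := 0).
  - apply filter_forall. intros. apply (@RInt_correct R_CompleteNormedModule), G_ex.
  - apply gf_cont.
Qed.

Definition Bf (z t : R) := exp (- (z ^ 2 * (1 + t ^ 2))) / (1 + t ^ 2).
Definition Bi (z : R) := RInt (Bf z) 0 1.

Lemma pos1 t : 0 < 1 + t ^ 2.
Proof. nra. Qed.

Lemma Bf_der z t : is_derive (fun u => Bf u t) z (-2 * z * exp (- (z ^ 2 * (1 + t ^ 2)))).
Proof. unfold Bf. auto_derive. - generalize (pos1 t); lra. - simpl. field. generalize (pos1 t); simpl; lra. Qed.

Lemma Bf_cont z t : continuous (Bf z) t.
Proof. apply (@ex_derive_continuous R_AbsRing R_NormedModule). unfold Bf. auto_derive. generalize (pos1 t); lra. Qed.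

Lemma Bf_ex z a b : ex_RInt (Bf z) a b.
Proof. apply (@ex_RInt_continuous R_CompleteNormedModule). intros; apply Bf_cont. Qed.

Lemma exp_cpt x : continuity_pt exp x.
Proof. apply derivable_continuous_pt, derivable_pt_exp. Qed.

Lemma dB_cont z t : continuity_2d_pt (fun u v => -2 * u * exp (- (u ^ 2 * (1 + v ^ 2)))) z t.
Proof.
  apply continuity_2d_pt_ext with (f := fun u v => (-2 * u) * exp (- (u * u * (1 + v * v)))).
  { intros; f_equal. f_equal. f_equal. ring. }
  apply continuity_2d_pt_mult.
  - apply continuity_2d_pt_mult. apply continuity_2d_pt_const. apply continuity_2d_pt_id1.
  - apply continuity_1d_2d_pt_comp with (f := exp). apply exp_cpt.
    apply continuity_2d_pt_opp.
    apply continuity_2d_pt_mult.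
    + apply continuity_2d_pt_mult; apply continuity_2d_pt_id1.
    + apply continuity_2d_pt_plus. apply continuity_2d_pt_const.
      apply continuity_2d_pt_mult; apply continuity_2d_pt_id2.
Qed.

Lemma B_deriv z : is_derive Bi z (-2 * exp (- z ^ 2) * G z).
Proof.
  assert (H := is_derive_RInt_param Bf 0 1 z).
  unfold Bi.
  replace (-2 * exp (- z ^ 2) * G z) with (RInt (fun t => Derive (fun u => Bf u t) z) 0 1).
  apply H.
  - apply filter_forall. intros. eexists. apply Bf_der.
  - intros. eapply continuity_2d_pt_ext. 2: apply (dB_cont z t).
    intros; simpl. symmetry. apply is_derive_unique, Bf_der.
  - apply filter_forall. intros. apply Bf_ex.
  - rewrite (RInt_ext _ (fun t => scal (-2 * exp (- z ^ 2)) (scal z (gf (z * t + 0))))).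
    2:{ intros. transitivity (-2 * z * exp (- (z ^ 2 * (1 + x ^ 2)))). { apply is_derive_unique, Bf_der. } unfold gf, scal; simpl; unfold mult; simpl.
        replace (- (z * (z * 1) * (1 + x * (x * 1)))) with (- (z * (z * 1)) + - ((z * x + 0) * ((z * x + 0) * 1))) by ring.
        rewrite exp_plus. ring. }
    rewrite (@RInt_scal R_CompleteNormedModule).
    2:{ apply (@ex_RInt_continuous R_CompleteNormedModule). intros. apply (continuous_scal_r z (fun t => gf (z*t+0))).
        apply continuous_comp. apply (@ex_derive_continuous R_AbsRing R_NormedModule). auto_derive. auto. apply gf_cont. }
    rewrite (@RInt_comp_lin R_CompleteNormedModule). 2: apply G_ex.
    unfold G, scal; simpl; unfold mult; simpl. f_equal. f_equal; ring.
Qed.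

Definition K (z : R) := G z ^ 2 + Bi z.

Lemma K_der z : is_derive K z 0.
Proof.
  replace 0 with (plus (INR 2 * gf z * G z ^ Init.Nat.pred 2) (-2 * exp (- z ^ 2) * G z)).
  - apply (is_derive_plus (fun z => G z ^ 2) Bi). apply is_derive_pow, G_deriv. apply B_deriv.
  - unfold gf, plus; simpl. ring.
Qed.

Lemma cpt_of_der (f : R -> R) x l : is_derive f x l -> continuity_pt f x.
Proof. intros H. apply continuity_pt_filterlim. apply (cont_of_der f x l H). Qed.

Lemma K_const z : K z = K 0.
Proof.
  destruct (MVT_gen K 0 z (fun _ => 0)) as [c [_ Hc]].
  - intros; apply K_der.
  - intros; eapply cpt_of_der; apply K_der.
  - lra.
Qed.

Lemma atan_int : RInt (fun t => / (1 + t ^ 2)) 0 1 = PI / 4.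
Proof.
  rewrite (RInt_ext _ (fun t => / (1 + t²))).
  2:{ intros. unfold Rsqr. f_equal. ring. }
  rewrite (is_RInt_unique _ _ _ (minus (atan 1) (atan 0))).
  - rewrite atan_1, atan_0. unfold minus, plus, opp; simpl. ring.
  - apply (@is_RInt_derive R_CompleteNormedModule).
    + intros; apply is_derive_atan.
    + intros. apply (@ex_derive_continuous R_AbsRing R_NormedModule). auto_derive.
      unfold Rsqr. nra.
Qed.

Lemma K0 : K 0 = PI / 4.
Proof.
  unfold K, G, Bi. rewrite RInt_point. unfold zero; simpl.
  rewrite <- atan_int. rewrite Rmult_0_l, Rplus_0_l. apply RInt_ext.
  intros. unfold Bf. replace (- (0 ^ 2 * (1 + x ^ 2))) with 0 by ring. rewrite exp_0. unfold Rdiv. apply Rmult_1_l.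
Qed.

Lemma Bi_le z : Bi z <= exp (- z ^ 2) * (PI / 4).
Proof.
  rewrite <- atan_int.
  rewrite <- (@RInt_scal R_CompleteNormedModule).
  2:{ apply (@ex_RInt_continuous R_CompleteNormedModule). intros.
      apply (@ex_derive_continuous R_AbsRing R_NormedModule). auto_derive. generalize (pos1 z0); lra. }
  apply RInt_le. lra. apply Bf_ex.
  { apply (@ex_RInt_continuous R_CompleteNormedModule). intros.
    apply (@ex_derive_continuous R_AbsRing R_NormedModule). unfold scal; simpl; unfold mult; simpl. auto_derive. generalize (pos1 z0); lra. }
  intros t Ht. change (Bf z t <= exp (- z ^ 2) * / (1 + t ^ 2)). unfold Bf.
  generalize (pos1 t); intros.
  unfold Rdiv. apply Rmult_le_compat_r. left; apply Rinv_0_lt_compat; lra.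
  destruct (Req_dec (- (z ^ 2 * (1 + t ^ 2))) (- z ^ 2)) as [e|e]. rewrite e; lra.
  left; apply exp_increasing. assert (0 <= z^2 * t^2) by (apply Rmult_le_pos; nra). nra.
Qed.

Lemma chu z : PI / 4 * (1 - exp (- z ^ 2)) <= G z ^ 2.
Proof.
  assert (H := K_const z). rewrite K0 in H. unfold K in H.
  generalize (Bi_le z). nra.
Qed.

Lemma erf_G z : erf z = 2 / sqrt PI * G z.
Proof. reflexivity. Qed.

Lemma erf_sq z : 1 - exp (- z ^ 2) <= erf z ^ 2.
Proof.
  rewrite erf_G. assert (H := chu z). assert (HP := PI_RGT_0).
  assert (Hs : sqrt PI * sqrt PI = PI) by (apply sqrt_sqrt; lra).
  assert (0 < sqrt PI) by (apply sqrt_lt_R0; lra).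
  replace ((2 / sqrt PI * G z) ^ 2) with (4 * G z ^ 2 / (sqrt PI * sqrt PI)) by (field; lra).
  rewrite Hs. replace (4 * G z ^ 2 / PI) with (4 / PI * G z ^ 2) by (field; lra).
  apply Rmult_le_reg_l with (PI / 4). lra.
  replace (PI / 4 * (4 / PI * G z ^ 2)) with (G z ^ 2) by (field; lra). exact H.
Qed.

Lemma gf_pos t : 0 <= gf t.
Proof. left; apply exp_pos. Qed.

Lemma erf_nonneg z : 0 <= z -> 0 <= erf z.
Proof.
  intros Hz. rewrite erf_G. apply Rmult_le_pos.
  - assert (0 < sqrt PI) by (apply sqrt_lt_R0; apply PI_RGT_0). unfold Rdiv.
    apply Rmult_le_pos. lra. left; apply Rinv_0_lt_compat; lra.
  - apply RInt_ge_0; auto. apply G_ex. intros; apply gf_pos.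
Qed.

Lemma erf_der z : is_derive erf z (2 / sqrt PI * gf z).
Proof.
  apply is_derive_ext with (f := fun z => 2 / sqrt PI * G z). intros; reflexivity.
  apply is_derive_scal, G_deriv.
Qed.

Definition g (u : R) := exp (u ^ 2 / 2) * erf (u / sqrt 2).

Lemma sqrt2_sq : sqrt 2 * sqrt 2 = 2.
Proof. apply sqrt_sqrt; lra. Qed.

Lemma sqrt2_pos : 0 < sqrt 2.
Proof. apply sqrt_lt_R0; lra. Qed.

Lemma g_sq u : exp (u ^ 2 / 2) * (exp (u ^ 2 / 2) - 1) <= g u ^ 2.
Proof.
  unfold g. assert (H := erf_sq (u / sqrt 2)).
  assert (e : (u / sqrt 2) ^ 2 = u ^ 2 / 2).
  { generalize sqrt2_sq sqrt2_pos; intros. field_simplify; [|lra]. rewrite <- H0 at 2. field. lra. }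
  rewrite e in H. rewrite exp_Ropp in H.
  set (E := exp (u ^ 2 / 2)) in *. assert (0 < E) by apply exp_pos.
  replace ((E * erf (u / sqrt 2)) ^ 2) with (E ^ 2 * erf (u / sqrt 2) ^ 2) by ring.
  replace (E * (E - 1)) with (E ^ 2 * (1 - / E)) by (field; lra).
  apply Rmult_le_compat_l. nra. exact H.
Qed.

Lemma g_nonneg u : 0 <= u -> 0 <= g u.
Proof.
  intros. unfold g. apply Rmult_le_pos. left; apply exp_pos.
  apply erf_nonneg. unfold Rdiv. apply Rmult_le_pos; auto. left; apply Rinv_0_lt_compat, sqrt2_pos.
Qed.

Lemma g_cont u : continuous g u.
Proof.
  unfold g. apply (continuous_mult (fun u => exp (u ^ 2 / 2)) (fun u => erf (u / sqrt 2))).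
  - apply (@ex_derive_continuous R_AbsRing R_NormedModule). auto_derive. auto.
  - apply (continuous_comp (fun u => u / sqrt 2) erf).
    + apply (@ex_derive_continuous R_AbsRing R_NormedModule). auto_derive. generalize sqrt2_pos; lra.
    + eapply cont_of_der. apply erf_der.
Qed.

Lemma g_ex a b : ex_RInt g a b.
Proof. apply (@ex_RInt_continuous R_CompleteNormedModule). intros; apply g_cont. Qed.

Lemma I_der z : is_derive I_int z (g z).
Proof.
  apply is_derive_RInt with (f := g) (a := 0).
  - apply filter_forall. intros. apply (@RInt_correct R_CompleteNormedModule), g_ex.
  - apply g_cont.
Qed.

Definition Q (t : R) := (exp (t ^ 2 / 2) - 1) ^ 3 / (t ^ 2 * exp (t ^ 2 / 2)).
Definition dQ (t : R) := let E := exp (t ^ 2 / 2) in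
  3 * (E - 1) ^ 2 / t - (E - 1) ^ 3 * (t ^ 2 + 2) / (t ^ 3 * E).

Lemma Q_der t : 0 < t -> is_derive Q t (dQ t).
Proof.
  intros Ht. assert (0 < exp (t ^ 2 / 2)) by apply exp_pos.
  unfold Q, dQ. auto_derive.
  - replace (exp (t * (t * 1) * / 2)) with (exp (t ^ 2 / 2)) by (f_equal; unfold Rdiv; simpl; ring).
    apply Rgt_not_eq. apply Rmult_lt_0_compat; [nra|lra].
  - replace (exp (t * (t * 1) * / 2)) with (exp (t ^ 2 / 2)) by (f_equal; unfold Rdiv; simpl; ring).
    set (E := exp (t ^ 2 / 2)) in *. field. split; lra.
Qed.

Lemma E_gt1 t : 0 < t -> 1 < exp (t ^ 2 / 2).
Proof. intros. rewrite <- exp_0. apply exp_increasing. nra. Qed.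

Lemma Q_pos t : 0 < t -> 0 < Q t.
Proof.
  intros Ht. generalize (E_gt1 t Ht); intros. unfold Q.
  apply Rdiv_lt_0_compat. apply pow_lt; lra. apply Rmult_lt_0_compat; nra.
Qed.

Lemma ell_der t : 0 < t -> is_derive ell t (dQ t / (2 * sqrt (Q t))).
Proof.
  intros Ht. apply is_derive_ext with (f := fun x => sqrt (Q x)). intros; reflexivity.
  apply is_derive_sqrt. apply Q_der; auto. apply Q_pos; auto.
Qed.

Lemma alg (t E S gg : R) : 0 < t -> 1 < E -> 1 + t ^ 2 / 2 <= E -> 0 <= S ->
  S ^ 2 = (E - 1) ^ 3 / (t ^ 2 * E) -> 0 <= gg -> E * (E - 1) <= gg ^ 2 ->
  3 * (E - 1) ^ 2 / t - (E - 1) ^ 3 * (t ^ 2 + 2) / (t ^ 3 * E) <= 2 * S * gg.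
Proof.
  intros Ht HE HE2 HS HS2 Hg Hg2.
  assert (h1 : 2 * (E - 1) ^ 2 / t - (3 * (E - 1) ^ 2 / t - (E - 1) ^ 3 * (t ^ 2 + 2) / (t ^ 3 * E))
              = 2 * (E - 1) ^ 2 * (E - 1 - t ^ 2 / 2) / (t ^ 3 * E)) by (field; split; lra).
  assert (h1' : 0 <= 2 * (E - 1) ^ 2 * (E - 1 - t ^ 2 / 2) / (t ^ 3 * E)).
  { apply Rdiv_le_0_compat. apply Rmult_le_pos. nra. lra. apply Rmult_lt_0_compat. apply pow_lt; lra. lra. }
  assert (h2 : ((E - 1) ^ 2 / t) ^ 2 <= (S * gg) ^ 2).
  { replace ((S * gg) ^ 2) with (S ^ 2 * gg ^ 2) by ring. rewrite HS2.
    replace (((E - 1) ^ 2 / t) ^ 2) with ((E - 1) ^ 3 / (t ^ 2 * E) * (E * (E - 1))) by (field; split; lra).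
    apply Rmult_le_compat_l; auto. apply Rdiv_le_0_compat. apply pow_le; lra. apply Rmult_lt_0_compat; nra. }
  assert (h3 : (E - 1) ^ 2 / t <= S * gg).
  { assert (0 <= (E - 1) ^ 2 / t) by (apply Rdiv_le_0_compat; nra).
    assert (0 <= S * gg) by (apply Rmult_le_pos; auto).
    destruct (Rle_lt_dec ((E - 1) ^ 2 / t) (S * gg)) as [h|h]; auto.
    exfalso. nra. }
  lra.
Qed.

Lemma key t : 0 < t -> dQ t / (2 * sqrt (Q t)) <= g t.
Proof.
  intros Ht. assert (HQ := Q_pos t Ht). assert (0 < sqrt (Q t)) by (apply sqrt_lt_R0; auto).
  replace (g t) with ((2 * sqrt (Q t) * g t) / (2 * sqrt (Q t))) by (field; lra).
  unfold Rdiv at 1 2. apply Rmult_le_compat_r. left; apply Rinv_0_lt_compat; lra.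
  unfold dQ. apply alg; auto.
  - apply E_gt1; auto.
  - apply exp_ineq1_le.
  - lra.
  - rewrite <- Rsqr_pow2, Rsqr_sqrt; [reflexivity | lra].
  - apply g_nonneg; lra.
  - apply g_sq.
Qed.

Lemma ell_small e : 0 < e -> e <= 1 -> ell e <= 2 * e ^ 2.
Proof.
  intros He He1. unfold ell.
  set (E := exp (e ^ 2 / 2)).
  assert (HE : 1 < E) by (apply E_gt1; auto).
  assert (HE1 : E * (1 - e ^ 2 / 2) <= 1).
  { assert (H := exp_ineq1_le (- (e ^ 2 / 2))). rewrite exp_Ropp in H. fold E in H.
    apply Rmult_le_reg_r with (/ E). apply Rinv_0_lt_compat; lra.
    replace (E * (1 - e ^ 2 / 2) * / E) with (1 - e ^ 2 / 2) by (field; lra). lra. }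
  assert (HE3 : E <= 3).
  { apply Rle_trans with (exp 1). unfold E. destruct (Req_dec (e ^ 2 / 2) 1) as [q|q].
    rewrite q; lra. left; apply exp_increasing. nra. apply exp_le_3. }
  assert (HA : E - 1 <= 2 * e ^ 2) by nra.
  rewrite <- (sqrt_pow2 (2 * e ^ 2)) by nra.
  apply sqrt_le_1_alt.
  apply Rle_trans with ((E - 1) ^ 2).
  - apply Rmult_le_reg_r with (e ^ 2 * E). nra.
    replace ((E - 1) ^ 3 / (e ^ 2 * E) * (e ^ 2 * E)) with ((E - 1) ^ 3) by (field; split; nra).
    replace ((E - 1) ^ 3) with ((E - 1) ^ 2 * (E - 1)) by ring.
    apply Rmult_le_compat_l. nra. nra.
  - apply pow_incr. lra.
Qed.

Lemma D_mono e x : 0 < e -> e <= x -> I_int e - ell e <= I_int x - ell x.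
Proof.
  intros He Hx.
  destruct (MVT_gen (fun t => I_int t - ell t) e x (fun t => g t - dQ t / (2 * sqrt (Q t)))) as [c [Hc Hd]].
  - intros y Hy. rewrite Rmin_left, Rmax_right in Hy by lra.
    apply (is_derive_minus I_int ell). apply I_der. apply ell_der; lra.
  - intros y Hy. rewrite Rmin_left, Rmax_right in Hy by lra.
    eapply cpt_of_der. apply (is_derive_minus I_int ell). apply I_der. apply ell_der; lra.
  - rewrite Rmin_left, Rmax_right in Hc by lra.
    assert (0 <= g c - dQ c / (2 * sqrt (Q c))) by (generalize (key c ltac:(lra)); lra).
    assert (0 <= (g c - dQ c / (2 * sqrt (Q c))) * (x - e)) by (apply Rmult_le_pos; lra).
    lra.
Qed.

Lemma I_nonneg e : 0 <= e -> 0 <= I_int e.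
Proof. intros. unfold I_int. apply RInt_ge_0; auto. apply g_ex. intros; apply g_nonneg; lra. Qed.

Lemma main_pos x : 0 < x -> ell x <= I_int x.
Proof.
  intros Hx. destruct (Rle_lt_dec (ell x) (I_int x)) as [h|h]; auto. exfalso.
  set (d := ell x - I_int x).
  set (e := Rmin (x / 2) (Rmin 1 (d / 4))).
  assert (He1 : e <= x / 2) by apply Rmin_l.
  assert (He2 : e <= 1) by (eapply Rle_trans; [apply Rmin_r|apply Rmin_l]).
  assert (He3 : e <= d / 4) by (eapply Rle_trans; [apply Rmin_r|apply Rmin_r]).
  assert (He0 : 0 < e).
  { unfold e. apply Rmin_pos. lra. apply Rmin_pos. lra. unfold d; lra. }
  generalize (D_mono e x He0 ltac:(lra)) (ell_small e He0 He2) (I_nonneg e ltac:(lra)).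
  intros. assert (e ^ 2 <= e) by nra. unfold d in *. lra.
Qed.

Lemma G_odd z : G (- z) = - G z.
Proof.
  unfold G.
  replace (- z) with (-1 * z + 0) by ring.
  replace 0 with (-1 * 0 + 0) at 1 by ring.
  rewrite <- (@RInt_comp_lin R_CompleteNormedModule). 2: apply G_ex.
  rewrite (RInt_ext _ (fun y => opp (gf y))).
  2:{ intros. unfold gf. change (-1 * exp (- (-1 * x + 0) ^ 2) = - exp (- x ^ 2)).
      replace ((-1 * x + 0) ^ 2) with (x ^ 2) by ring. ring. }
  rewrite (@RInt_opp R_CompleteNormedModule). 2: apply G_ex. reflexivity.
Qed.

Lemma g_odd y : g (- y) = - g y.
Proof.
  unfold g. rewrite !erf_G. replace (- y / sqrt 2) with (- (y / sqrt 2)) by (field; generalize sqrt2_pos; lra).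
  rewrite G_odd. replace ((- y) ^ 2) with (y ^ 2) by ring. ring.
Qed.

Lemma I_even x : I_int (- x) = I_int x.
Proof.
  unfold I_int. fold g.
  replace (- x) with (-1 * x + 0) by ring.
  replace 0 with (-1 * 0 + 0) at 1 by ring.
  rewrite <- (@RInt_comp_lin R_CompleteNormedModule). 2: apply g_ex.
  apply RInt_ext. intros. change (-1 * g (-1 * x0 + 0) = g x0).
  replace (-1 * x0 + 0) with (- x0) by ring. rewrite g_odd. ring.
Qed.

Theorem lemma8 (x : R) (hx : x <> 0) : ell x <= I_int x.
Proof.
  destruct (Rlt_or_le 0 x) as [h|h].
  - apply main_pos; auto.
  - rewrite <- I_even. replace (ell x) with (ell (- x)).
    apply main_pos; lra.
    unfold ell. replace ((- x) ^ 2) with (x ^ 2) by ring. reflexivity.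
Qed.
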